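(* Let $m\ge4$, let $\mathcal W_1$ be an $m\times m$ quadrilateral labyrinth set in $Q$, and let $L_\infty$ be the associated quadrilateral labyrinth fractal. Then the interior of $L_\infty$ in $\mathbb{R}^2$ is empty.
   Context: Let $Q$ be a convex quadrilateral in $\mathbb{R}^2$. Divide $Q$ into two triangles by its shorter diagonal (either diagonal if they have equal length). Label the vertices $Q_1,Q_2,Q_3,Q_4$ anticlockwise, starting at an endpoint of that diagonal, so that the diagonal is $Q_1Q_3$. Let $\Delta_1$ be the closed triangle $Q_1Q_2Q_3$ and $\Delta_2$ the closed triangle $Q_3Q_4Q_1$. Every $x\in Q$ has a unique representation $x=\sum_{i=1}^4\alpha_iQ_i$, defined as follows. If $x\in\Delta_1$, then $\alpha_4=0$ and $(\alpha_1,\alpha_2,\alpha_3)$ are the barycentric coordinates of $x$ in $\Delta_1$. If $x\in\Delta_2$, then $\alpha_2=0$ and $(\alpha_1,\alpha_3,\alpha_4)$ are the barycentric coordinates of $x$ in $\Delta_2$. For an ordered quadruple $V=(V_1,\dots,V_4)$ define $P_V:Q\to\mathbb{R}^2$ by $P_V(x)=\sum_i\alpha_iV_i$. For an integer $m\ge2$, define the following index sets: - $A_1=\{(k_1,k_2,k_3,0)\in\mathbb{Z}_{\ge0}^4:k_1+k_2+k_3=m-1,\ k_2\ne0\}$, - $A_2=\{(k_1,0,k_3,k_4)\in\mathbb{Z}_{\ge0}^4:k_1+k_3+k_4=m-1,\ k_4\ne0\}$, - $A_3=\{(k_1,0,k_3,0)\in\mathbb{Z}_{\ge0}^4:k_1+k_3=m-1\}$,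 - $A=A_1\cup A_2\cup A_3$. For $k\in A$, let $S_m(k)$ be the quadrilateral with ordered vertices $R_1R_2R_3R_4$ given below. - If $k\in A_1$: $R_1=\frac{(k_1+1)Q_1+k_2Q_2+k_3Q_3}{m}$, $R_2=\frac{k_1Q_1+(k_2+1)Q_2+k_3Q_3}{m}$, $R_3=\frac{k_1Q_1+k_2Q_2+(k_3+1)Q_3}{m}$, $R_4=\frac{(k_1+1)Q_1+(k_2-1)Q_2+(k_3+1)Q_3}{m}$. - If $k\in A_2$: $R_1=\frac{(k_1+1)Q_1+k_3Q_3+k_4Q_4}{m}$, $R_2=\frac{(k_1+1)Q_1+(k_3+1)Q_3+(k_4-1)Q_4}{m}$, $R_3=\frac{k_1Q_1+(k_3+1)Q_3+k_4Q_4}{m}$, $R_4=\frac{k_1Q_1+k_3Q_3+(k_4+1)Q_4}{m}$. - If $k\in A_3$: $R_1=\frac{(k_1+1)Q_1+k_3Q_3}{m}$, $R_2=\frac{k_1Q_1+Q_2+k_3Q_3}{m}$, $R_3=\frac{k_1Q_1+(k_3+1)Q_3}{m}$, $R_4=\frac{k_1Q_1+k_3Q_3+Q_4}{m}$. Let $\mathcal S_m=\{S_m(k):k\in A\}$. For $\mathcal W\subseteq\mathcal S_m$, the graph $\mathcal G(\mathcal W)$ has vertex set $\mathcal W$, with two elements adjacent iff they have a common side. An $m\times m$ quadrilateral labyrinth set ($m\ge4$) is a set $\mathcal W_1\subseteq\mathcal S_m$ satisfying three properties. (1) Tree property: $\mathcal G(\mathcal W_1)$ is a tree. (2) Exit property: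 there is exactly one $(k_1,k_2,0,0)\in A$ with $S_m(k_1,k_2,0,0)\in\mathcal W_1$ and $S_m(0,0,k_2,k_1)\in\mathcal W_1$. There is also exactly one $(k_1,0,0,k_4)\in A$ with $S_m(k_1,0,0,k_4)\in\mathcal W_1$ and $S_m(0,k_1,k_4,0)\in\mathcal W_1$. (3) Corner property: $\mathcal W_1$ contains at most one element of $\{S_m(m-1,0,0,0),S_m(0,0,m-1,0)\}$ and at most one element of $\{S_m(0,m-1,0,0),S_m(0,0,0,m-1)\}$. Define recursively for $n\ge2$: $\mathcal W_n=\{P_{W}(W'):W'\in\mathcal W_1,\ W\in\mathcal W_{n-1}\}$. Here $P_W(W')$ is the quadrilateral whose ordered vertices are the images under $P_W$ of the ordered vertices of $W'$. Let $L_n=\bigcup_{W\in\mathcal W_n}W$ (closed regions) and $L_\infty=\bigcap_{n\ge1}L_n$. *)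

(* Defs.v *)
From Stdlib Require Import Reals Lra List.
Import ListNotations.
Open Scope R_scope.

Definition pt := (R * R)%type.

Definition comb4 (a1 a2 a3 a4 : R) (p1 p2 p3 p4 : pt) : pt :=
  (a1 * fst p1 + a2 * fst p2 + a3 * fst p3 + a4 * fst p4,
   a1 * snd p1 + a2 * snd p2 + a3 * snd p3 + a4 * snd p4).

Record quad := Quad { v1 : pt; v2 : pt; v3 : pt; v4 : pt }.

(* orientation of the turn o -> a -> b (positive = anticlockwise / left turn) *)
Definition cross (o a b : pt) : R :=
  (fst a - fst o) * (snd b - snd o) - (snd a - snd o) * (fst b - fst o).

Definition dist2 (p q : pt) : R := (fst p - fst q) ^ 2 + (snd p - snd q) ^ 2.

Definition convex_ccw (Q : quad) : Prop :=
  0 < cross (v1 Q) (v2 Q) (v3 Q) /\ 0 < cross (v2 Q) (v3 Q) (v4 Q) /\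
  0 < cross (v3 Q) (v4 Q) (v1 Q) /\ 0 < cross (v4 Q) (v1 Q) (v2 Q).

Definition shorter_diag13 (Q : quad) : Prop :=
  dist2 (v1 Q) (v3 Q) <= dist2 (v2 Q) (v4 Q).

(* (a1,a2,a3,a4) is the representation of x in Q: barycentric coordinates in
   Delta1 = Q1Q2Q3 (with a4 = 0) or in Delta2 = Q3Q4Q1 (with a2 = 0). *)
Definition is_rep (Q : quad) (x : pt) (a1 a2 a3 a4 : R) : Prop :=
  x = comb4 a1 a2 a3 a4 (v1 Q) (v2 Q) (v3 Q) (v4 Q) /\
  ((a4 = 0 /\ 0 <= a1 /\ 0 <= a2 /\ 0 <= a3 /\ a1 + a2 + a3 = 1) \/
   (a2 = 0 /\ 0 <= a1 /\ 0 <= a3 /\ 0 <= a4 /\ a1 + a3 + a4 = 1)).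

(* graph of P_V : Q -> R^2, i.e. PV Q V x y <-> x in Q and P_V(x) = y *)
Definition PV (Q V : quad) (x y : pt) : Prop :=
  exists a1 a2 a3 a4, is_rep Q x a1 a2 a3 a4 /\
    y = comb4 a1 a2 a3 a4 (v1 V) (v2 V) (v3 V) (v4 V).

Definition inA1 (m k1 k2 k3 k4 : nat) : Prop :=
  k4 = 0%nat /\ (k1 + k2 + k3 = m - 1)%nat /\ k2 <> 0%nat.
Definition inA2 (m k1 k2 k3 k4 : nat) : Prop :=
  k2 = 0%nat /\ (k1 + k3 + k4 = m - 1)%nat /\ k4 <> 0%nat.
Definition inA3 (m k1 k2 k3 k4 : nat) : Prop :=
  k2 = 0%nat /\ k4 = 0%nat /\ (k1 + k3 = m - 1)%nat.
Definition inA (m k1 k2 k3 k4 : nat) : Prop :=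
  inA1 m k1 k2 k3 k4 \/ inA2 m k1 k2 k3 k4 \/ inA3 m k1 k2 k3 k4.

(* S_m(k); the case split follows A1 (k2<>0), A2 (k2=0, k4<>0), A3 (k2=k4=0),
   which is exactly the partition of A *)
Definition Scell (Q : quad) (m k1 k2 k3 k4 : nat) : quad :=
  let c (a1 a2 a3 a4 : R) :=
    comb4 (a1 / INR m) (a2 / INR m) (a3 / INR m) (a4 / INR m)
          (v1 Q) (v2 Q) (v3 Q) (v4 Q) in
  let r1 := INR k1 in let r2 := INR k2 in
  let r3 := INR k3 in let r4 := INR k4 in
  if negb (Nat.eqb k2 0) then
    Quad (c (r1 + 1) r2 r3 0) (c r1 (r2 + 1) r3 0)
         (c r1 r2 (r3 + 1) 0) (c (r1 + 1) (r2 - 1) (r3 + 1) 0)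
  else if negb (Nat.eqb k4 0) then
    Quad (c (r1 + 1) 0 r3 r4) (c (r1 + 1) 0 (r3 + 1) (r4 - 1))
         (c r1 0 (r3 + 1) r4) (c r1 0 r3 (r4 + 1))
  else
    Quad (c (r1 + 1) 0 r3 0) (c r1 1 r3 0) (c r1 0 (r3 + 1) 0) (c r1 0 r3 1).

Definition in_Sm (Q : quad) (m : nat) (W : quad) : Prop :=
  exists k1 k2 k3 k4, inA m k1 k2 k3 k4 /\ W = Scell Q m k1 k2 k3 k4.

Definition sides (W : quad) : list (pt * pt) :=
  [(v1 W, v2 W); (v2 W, v3 W); (v3 W, v4 W); (v4 W, v1 W)].
Definition same_segment (s t : pt * pt) : Prop :=
  (fst s = fst t /\ snd s = snd t) \/ (fst s = snd t /\ snd s = fst t).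
Definition common_side (W W' : quad) : Prop :=
  exists s t, In s (sides W) /\ In t (sides W') /\ same_segment s t.

Definition adj (W W' : quad) : Prop := W <> W' /\ common_side W W'.

Fixpoint chain (e : quad -> quad -> Prop) (l : list quad) : Prop :=
  match l with
  | a :: ((b :: _) as t) => e a b /\ chain e t
  | _ => True
  end.

Definition is_tree (V : quad -> Prop) (e : quad -> quad -> Prop) : Prop :=
  (exists v, V v) /\
  (forall a b, V a -> V b ->
     exists l, Forall V l /\ chain e (a :: l) /\ last (a :: l) a = b) /\
  ~ (exists v0 l, (2 <= length l)%nat /\ NoDup (v0 :: l) /\ Forall V (v0 :: l) /\
       chain e (v0 :: l) /\ e (last l v0) v0).

Definition tree_property (W1 : quad -> Prop) : Prop := is_tree W1 adj.

Definition exit_property (Q : quad) (m : nat) (W1 : quad -> Prop) : Prop :=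
  (exists k1 k2,
     (inA m k1 k2 0 0 /\ W1 (Scell Q m k1 k2 0 0) /\ W1 (Scell Q m 0 0 k2 k1)) /\
     forall k1' k2',
       inA m k1' k2' 0 0 /\ W1 (Scell Q m k1' k2' 0 0) /\ W1 (Scell Q m 0 0 k2' k1') ->
       k1' = k1 /\ k2' = k2) /\
  (exists k1 k4,
     (inA m k1 0 0 k4 /\ W1 (Scell Q m k1 0 0 k4) /\ W1 (Scell Q m 0 k1 k4 0)) /\
     forall k1' k4',
       inA m k1' 0 0 k4' /\ W1 (Scell Q m k1' 0 0 k4') /\ W1 (Scell Q m 0 k1' k4' 0) ->
       k1' = k1 /\ k4' = k4).

Definition corner_property (Q : quad) (m : nat) (W1 : quad -> Prop) : Prop :=
  ~ (W1 (Scell Q m (m - 1) 0 0 0) /\ W1 (Scell Q m 0 0 (m - 1) 0)) /\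
  ~ (W1 (Scell Q m 0 (m - 1) 0 0) /\ W1 (Scell Q m 0 0 0 (m - 1))).

Definition labyrinth_set (Q : quad) (m : nat) (W1 : quad -> Prop) : Prop :=
  (4 <= m)%nat /\ (forall W, W1 W -> in_Sm Q m W) /\
  tree_property W1 /\ exit_property Q m W1 /\ corner_property Q m W1.

(* V = P_W(W'): vertices of V are the images under P_W of those of W' *)
Definition quad_image (Q W W' V : quad) : Prop :=
  PV Q W (v1 W') (v1 V) /\ PV Q W (v2 W') (v2 V) /\
  PV Q W (v3 W') (v3 V) /\ PV Q W (v4 W') (v4 V).

(* Wn Q W1 n = W_n for n >= 1 (the value at n = 0 is irrelevant) *)
Fixpoint Wn (Q : quad) (W1 : quad -> Prop) (n : nat) : quad -> Prop :=
  match n with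
  | O => W1
  | S O => W1
  | S p => fun V => exists W' W, W1 W' /\ Wn Q W1 p W /\ quad_image Q W W' V
  end.

Definition in_tri (A B C x : pt) : Prop :=
  exists a b c, 0 <= a /\ 0 <= b /\ 0 <= c /\ a + b + c = 1 /\
    x = comb4 a b c 0 A B C A.
Definition quad_region (W : quad) (x : pt) : Prop :=
  in_tri (v1 W) (v2 W) (v3 W) x \/ in_tri (v3 W) (v4 W) (v1 W) x.

Definition Ln (Q : quad) (W1 : quad -> Prop) (n : nat) (x : pt) : Prop :=
  exists W, Wn Q W1 n W /\ quad_region W x.

Definition Linf (Q : quad) (W1 : quad -> Prop) (x : pt) : Prop :=
  forall n, (1 <= n)%nat -> Ln Q W1 n x.

Definition interior_pt (S : pt -> Prop) (x : pt) : Prop :=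
  exists eps, 0 < eps /\ forall y, dist2 x y < eps ^ 2 -> S y.

(* Main.v *)
Require Import Defs.
From Stdlib Require Import Reals Lra Lia Arith List Classical.
Import ListNotations.
Open Scope R_scope.


Definition valid4 (a1 a2 a3 a4 : R) : Prop :=
  (a4 = 0 /\ 0 <= a1 /\ 0 <= a2 /\ 0 <= a3 /\ a1 + a2 + a3 = 1) \/
  (a2 = 0 /\ 0 <= a1 /\ 0 <= a3 /\ 0 <= a4 /\ a1 + a3 + a4 = 1).

Lemma rep_unique (Q : quad) a1 a2 a3 a4 b1 b2 b3 b4 :
  convex_ccw Q -> valid4 a1 a2 a3 a4 -> valid4 b1 b2 b3 b4 ->
  comb4 a1 a2 a3 a4 (v1 Q) (v2 Q) (v3 Q) (v4 Q) =
  comb4 b1 b2 b3 b4 (v1 Q) (v2 Q) (v3 Q) (v4 Q) ->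
  a1 = b1 /\ a2 = b2 /\ a3 = b3 /\ a4 = b4.
Proof.
  destruct Q as [[x1 y1] [x2 y2] [x3 y3] [x4 y4]].
  unfold convex_ccw, cross, comb4; simpl.
  intros [c1 [_ [c2 _]]] Ha Hb Heq.
  injection Heq as Ex Ey.
  set (d2 := a2 - b2). set (d3 := a3 - b3). set (d4 := a4 - b4).
  assert (Hs : a1 - b1 = - (d2 + d3 + d4)) by (unfold d2, d3, d4; destruct Ha, Hb; lra).
  assert (Ex' : d2 * (x2 - x1) + d3 * (x3 - x1) + d4 * (x4 - x1) = 0).
  { replace (d2 * (x2 - x1) + d3 * (x3 - x1) + d4 * (x4 - x1)) with
      ((a1 - b1) * x1 + d2 * x2 + d3 * x3 + d4 * x4) by (rewrite Hs; ring).
    unfold d2, d3, d4; lra. }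
  assert (Ey' : d2 * (y2 - y1) + d3 * (y3 - y1) + d4 * (y4 - y1) = 0).
  { replace (d2 * (y2 - y1) + d3 * (y3 - y1) + d4 * (y4 - y1)) with
      ((a1 - b1) * y1 + d2 * y2 + d3 * y3 + d4 * y4) by (rewrite Hs; ring).
    unfold d2, d3, d4; lra. }
  set (C1 := (x2 - x1) * (y3 - y1) - (y2 - y1) * (x3 - x1)) in *.
  set (C2 := (x3 - x1) * (y4 - y1) - (y3 - y1) * (x4 - x1)).
  set (C3 := (x2 - x1) * (y4 - y1) - (y2 - y1) * (x4 - x1)).
  assert (HC2 : C2 > 0) by (unfold C2; nra).
  assert (A : d2 * C1 - d4 * C2 = 0).
  { transitivity ((d2 * (x2 - x1) + d3 * (x3 - x1) + d4 * (x4 - x1)) * (y3 - y1)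
      - (d2 * (y2 - y1) + d3 * (y3 - y1) + d4 * (y4 - y1)) * (x3 - x1)).
    unfold C1, C2; ring. rewrite Ex', Ey'; ring. }
  assert (B : - d3 * C1 - d4 * C3 = 0).
  { transitivity ((d2 * (x2 - x1) + d3 * (x3 - x1) + d4 * (x4 - x1)) * (y2 - y1)
      - (d2 * (y2 - y1) + d3 * (y3 - y1) + d4 * (y4 - y1)) * (x2 - x1)).
    unfold C1, C3; ring. rewrite Ex', Ey'; ring. }
  assert (C : d2 * C3 + d3 * C2 = 0).
  { transitivity ((d2 * (x2 - x1) + d3 * (x3 - x1) + d4 * (x4 - x1)) * (y4 - y1)
      - (d2 * (y2 - y1) + d3 * (y3 - y1) + d4 * (y4 - y1)) * (x4 - x1)).
    unfold C2, C3; ring. rewrite Ex', Ey'; ring. }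
  assert (H24 : d2 = 0 /\ d4 = 0).
  { unfold d2, d4 in *.
    destruct Ha as [Ha|Ha]; destruct Hb as [Hb|Hb]; destruct Ha as [ha4 Ha]; destruct Hb as [hb4 Hb].
    - rewrite ha4, hb4 in *. split; [|ring].
      assert ((a2 - b2) * C1 = 0) by lra.
      destruct (Rmult_integral _ _ H); lra.
    - rewrite ha4, hb4 in *. nra.
    - rewrite ha4, hb4 in *. nra.
    - rewrite ha4, hb4 in *. split; [ring|].
      assert ((a4 - b4) * C2 = 0) by lra.
      destruct (Rmult_integral _ _ H); lra. }
  destruct H24 as [h2 h4].
  rewrite h2, h4 in *.
  assert (d3 * C1 = 0) by lra.
  assert (h3 : d3 = 0) by (destruct (Rmult_integral _ _ H); lra).
  unfold d2, d3, d4 in *. lra.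
Qed.

Definition al1 s t := if Rle_dec t s then 1 - s else 1 - t.
Definition al2 s t := if Rle_dec t s then s - t else 0.
Definition al3 s t := if Rle_dec t s then t else s.
Definition al4 s t := if Rle_dec t s then 0 else t - s.
Definition psi (Q : quad) s t : pt :=
  comb4 (al1 s t) (al2 s t) (al3 s t) (al4 s t) (v1 Q) (v2 Q) (v3 Q) (v4 Q).

Definition sqq (Q : quad) (iM : R) (I J : nat) : quad :=
  Quad (psi Q (INR I * iM) (INR J * iM)) (psi Q ((INR I + 1) * iM) (INR J * iM))
       (psi Q ((INR I + 1) * iM) ((INR J + 1) * iM)) (psi Q (INR I * iM) ((INR J + 1) * iM)).

Ltac dal := unfold al1, al2, al3, al4 in *;
  repeat match goal with |- context [Rle_dec ?a ?b] => destruct (Rle_dec a b) end.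

Lemma al_valid s t : 0 <= s <= 1 -> 0 <= t <= 1 ->
  valid4 (al1 s t) (al2 s t) (al3 s t) (al4 s t).
Proof. intros. unfold valid4; dal; [left|right]; lra. Qed.

Lemma al23 s t : al2 s t + al3 s t = s /\ al3 s t + al4 s t = t.
Proof. dal; lra. Qed.

Lemma psi_inj Q s t s' t' : convex_ccw Q -> 0 <= s <= 1 -> 0 <= t <= 1 ->
  0 <= s' <= 1 -> 0 <= t' <= 1 -> psi Q s t = psi Q s' t' -> s = s' /\ t = t'.
Proof.
  intros HQ Hs Ht Hs' Ht' E.
  destruct (rep_unique Q _ _ _ _ _ _ _ _ HQ (al_valid s t Hs Ht) (al_valid s' t' Hs' Ht') E)
    as [_ [e2 [e3 e4]]].
  destruct (al23 s t); destruct (al23 s' t'). lra.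
Qed.

Lemma al_lo s t : t <= s -> al1 s t = 1-s /\ al2 s t = s-t /\ al3 s t = t /\ al4 s t = 0.
Proof. intros; dal; repeat split; lra. Qed.
Lemma al_up s t : s <= t -> al1 s t = 1-t /\ al2 s t = 0 /\ al3 s t = s /\ al4 s t = t-s.
Proof. intros; dal; repeat split; lra. Qed.

Ltac ralg :=
  repeat match goal with |- context [al1 ?a ?b] =>
    first [ let H := fresh in assert (H : b <= a) by nra; destruct (al_lo a b H) as [-> [-> [-> ->]]]
          | let H := fresh in assert (H : a <= b) by nra; destruct (al_up a b H) as [-> [-> [-> ->]]] ] end.

Lemma affine (Q : quad) iM I J s t : 0 < iM -> 0 <= s <= 1 -> 0 <= t <= 1 ->
  comb4 (al1 s t) (al2 s t) (al3 s t) (al4 s t)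
    (v1 (sqq Q iM I J)) (v2 (sqq Q iM I J)) (v3 (sqq Q iM I J)) (v4 (sqq Q iM I J))
  = psi Q ((INR I + s) * iM) ((INR J + t) * iM).
Proof.
  intros HiM Hs Ht.
  destruct Q as [[x1 y1] [x2 y2] [x3 y3] [x4 y4]].
  unfold sqq, psi, comb4; simpl.
  destruct (Rle_dec t s) as [r|r].
  - destruct (al_lo s t r) as [-> [-> [-> ->]]].
    destruct (lt_eq_lt_dec I J) as [[HIJ|HIJ]|HIJ].
    + apply le_INR in HIJ. rewrite S_INR in HIJ. ralg. f_equal; ring.
    + subst J. ralg. f_equal; ring.
    + apply le_INR in HIJ. rewrite S_INR in HIJ. ralg. f_equal; ring.
  - apply Rnot_le_lt in r. destruct (al_up s t (Rlt_le _ _ r)) as [-> [-> [-> ->]]].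
    destruct (lt_eq_lt_dec I J) as [[HIJ|HIJ]|HIJ].
    + apply le_INR in HIJ. rewrite S_INR in HIJ. ralg. f_equal; ring.
    + subst J. ralg. f_equal; ring.
    + apply le_INR in HIJ. rewrite S_INR in HIJ. ralg. f_equal; ring.
Qed.

Ltac cfin := unfold psi; ralg; f_equal; field; lra.

Lemma Scell_sqq Q m k1 k2 k3 k4 : inA m k1 k2 k3 k4 -> (1 <= m)%nat ->
  exists a b, (a < m)%nat /\ (b < m)%nat /\ Scell Q m k1 k2 k3 k4 = sqq Q (/ INR m) a b.
Proof.
  intros HA Hm.
  pose proof (pos_INR k1) as P1. pose proof (pos_INR k2) as P2.
  pose proof (pos_INR k3) as P3. pose proof (pos_INR k4) as P4.
  destruct HA as [[h4 [hs h2]]|[[h2 [hs h4]]|[h2 [h4 hs]]]]; subst.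
  - exists (k2 + k3)%nat, k3. split; [lia|]. split; [lia|].
    replace m with (k1 + k2 + k3 + 1)%nat by lia.
    assert (H2 : 1 <= INR k2) by (apply (le_INR 1); lia).
    unfold Scell. replace (negb (Nat.eqb k2 0)) with true by (destruct k2; [lia|reflexivity]). cbv iota.
    unfold sqq. rewrite !plus_INR. simpl (INR 1). simpl (INR 0).
    assert (Hd : 0 < INR k1 + INR k2 + INR k3 + 1) by lra.
    assert (Hi : 0 < / (INR k1 + INR k2 + INR k3 + 1)) by (apply Rinv_0_lt_compat; lra).
    f_equal; cfin.
  - exists k3, (k3 + k4)%nat. split; [lia|]. split; [lia|].
    replace m with (k1 + k3 + k4 + 1)%nat by lia.
    assert (H2 : 1 <= INR k4) by (apply (le_INR 1); lia).
    unfold Scell. replace (negb (Nat.eqb k4 0)) with true by (destruct k4; [lia|reflexivity]). simpl (negb (Nat.eqb 0 0)). cbv iota.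
    unfold sqq. rewrite !plus_INR. simpl (INR 1). simpl (INR 0).
    assert (Hd : 0 < INR k1 + INR k3 + INR k4 + 1) by lra.
    assert (Hi : 0 < / (INR k1 + INR k3 + INR k4 + 1)) by (apply Rinv_0_lt_compat; lra).
    f_equal; cfin.
  - exists k3, k3. split; [lia|]. split; [lia|].
    replace m with (k1 + k3 + 1)%nat by lia.
    unfold Scell. simpl (negb (Nat.eqb 0 0)). cbv iota.
    unfold sqq. rewrite !plus_INR. simpl (INR 1). simpl (INR 0).
    assert (Hd : 0 < INR k1 + INR k3 + 1) by lra.
    assert (Hi : 0 < / (INR k1 + INR k3 + 1)) by (apply Rinv_0_lt_compat; lra).
    f_equal; cfin.
Qed.

Lemma vertex_step Q iM I J s t y : convex_ccw Q -> 0 < iM ->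
  0 <= s <= 1 -> 0 <= t <= 1 -> PV Q (sqq Q iM I J) (psi Q s t) y ->
  y = psi Q ((INR I + s) * iM) ((INR J + t) * iM).
Proof.
  intros HQ HiM Hs Ht [b1 [b2 [b3 [b4 [[Ex Hv] Ey]]]]].
  destruct (rep_unique Q _ _ _ _ _ _ _ _ HQ (al_valid s t Hs Ht) Hv Ex) as [e1 [e2 [e3 e4]]].
  rewrite Ey, <- e1, <- e2, <- e3, <- e4. apply affine; auto.
Qed.

Lemma frac_bd (m a : nat) : (a < m)%nat -> 0 <= INR a * / INR m /\ (INR a + 1) * / INR m <= 1.
Proof.
  intros H. assert (Hm : 0 < INR m) by (apply lt_0_INR; lia).
  assert (Ha : INR a + 1 <= INR m) by (rewrite <- S_INR; apply le_INR; lia).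
  pose proof (pos_INR a).
  assert (0 < / INR m) by (apply Rinv_0_lt_compat; lra).
  split. nra.
  apply Rle_trans with (INR m * / INR m). nra. rewrite Rinv_r; lra.
Qed.

Lemma invariant Q m W1 : convex_ccw Q -> (4 <= m)%nat -> (forall W, W1 W -> in_Sm Q m W) ->
  forall n V, Wn Q W1 (S n) V -> exists I J,
    (INR I + 1) * (/ INR m) ^ (S n) <= 1 /\ (INR J + 1) * (/ INR m) ^ (S n) <= 1 /\
    W1 (sqq Q (/ INR m) (I mod m) (J mod m)) /\ V = sqq Q ((/ INR m) ^ (S n)) I J.
Proof.
  intros HQ Hm HS.
  assert (Hm0 : 0 < INR m) by (apply lt_0_INR; lia).
  assert (Hi : 0 < / INR m) by (apply Rinv_0_lt_compat; lra).
  induction n as [|n IH]; intros V HV.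
  - simpl in HV. destruct (HS V HV) as [k1 [k2 [k3 [k4 [HA EV]]]]].
    destruct (Scell_sqq Q m k1 k2 k3 k4 HA ltac:(lia)) as [a [b [Ha [Hb E]]]].
    exists a, b. rewrite pow_1.
    destruct (frac_bd m a Ha). destruct (frac_bd m b Hb).
    rewrite (Nat.mod_small a m Ha), (Nat.mod_small b m Hb).
    rewrite <- E, <- EV. repeat split; auto.
  - change (exists W' W, W1 W' /\ Wn Q W1 (S n) W /\ quad_image Q W W' V) in HV.
    destruct HV as [W' [W [HW' [HW HI]]]].
    destruct (IH W HW) as [I [J [BI [BJ [HW1 EW]]]]].
    destruct (HS W' HW') as [k1 [k2 [k3 [k4 [HA EV]]]]].
    destruct (Scell_sqq Q m k1 k2 k3 k4 HA ltac:(lia)) as [a [b [Ha [Hb E]]]].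
    rewrite E in EV. subst W' W.
    set (im := / INR m) in *.
    set (iM := im ^ S n) in *.
    assert (HiM : 0 < iM) by (apply pow_lt; auto).
    exists (a + I * m)%nat, (b + J * m)%nat.
    change (im ^ S (S n)) with (im * iM).
    destruct (frac_bd m a Ha) as [A0 A1]. destruct (frac_bd m b Hb) as [B0 B1].
    fold im in A0, A1, B0, B1.
    assert (Hmi : INR m * im = 1) by (unfold im; field; lra).
    assert (key : forall c K, (INR (c + K * m) + 1) * (im * iM) = ((INR c + 1) * im + INR K) * iM).
    { intros c K. rewrite plus_INR, mult_INR.
      replace ((INR c + INR K * INR m + 1) * (im * iM)) with
        ((INR c + 1) * im * iM + INR K * (INR m * im) * iM) by ring. rewrite Hmi; ring. }
    assert (key2 : forall c K e, (INR (c + K * m) + e) * (im * iM) = (INR K + (INR c + e) * im) * iM).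
    { intros c K e. rewrite plus_INR, mult_INR.
      replace ((INR c + INR K * INR m + e) * (im * iM)) with
        ((INR c + e) * im * iM + INR K * (INR m * im) * iM) by ring. rewrite Hmi; ring. }
    rewrite !key.
    rewrite !Nat.Div0.mod_add, (Nat.mod_small a m Ha), (Nat.mod_small b m Hb).
    split; [nra|]. split; [nra|]. split; [exact HW'|].
    destruct HI as [P1 [P2 [P3 P4]]].
    destruct V as [w1 w2 w3 w4]; simpl in *.
    pose proof (pos_INR a). pose proof (pos_INR b).
    apply vertex_step in P1; [| auto | auto | nra | nra].
    apply vertex_step in P2; [| auto | auto | nra | nra].
    apply vertex_step in P3; [| auto | auto | nra | nra].
    apply vertex_step in P4; [| auto | auto | nra | nra].
    subst w1 w2 w3 w4. unfold sqq.
    rewrite !plus_INR, !mult_INR.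
    f_equal; f_equal; unfold iM, im; field; lra.
Qed.

Lemma comb_tri1 (P1 P2 P3 P4 : pt) a b c : a + b + c = 1 ->
  comb4 a b c 0 P1 P2 P3 P1 = comb4 (1 - (b + c)) ((b + c) - c) c 0 P1 P2 P3 P4.
Proof.
  intros H. destruct P1, P2, P3, P4; unfold comb4; simpl.
  replace a with (1 - b - c) by lra. f_equal; ring.
Qed.

Lemma comb_tri2 (P1 P2 P3 P4 : pt) a b c : a + b + c = 1 ->
  comb4 a b c 0 P3 P4 P1 P3 = comb4 (1 - (a + b)) 0 a ((a + b) - a) P1 P2 P3 P4.
Proof.
  intros H. destruct P1, P2, P3, P4; unfold comb4; simpl.
  replace c with (1 - a - b) by lra. f_equal; ring.
Qed.

Lemma region_psi Q iM I J x : 0 < iM -> quad_region (sqq Q iM I J) x ->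
  exists s t, 0 <= s <= 1 /\ 0 <= t <= 1 /\ x = psi Q ((INR I + s) * iM) ((INR J + t) * iM).
Proof.
  intros HiM [[a [b [c [Ha [Hb [Hc [Hs E]]]]]]]|[a [b [c [Ha [Hb [Hc [Hs E]]]]]]]].
  - exists (b + c), c. split; [lra|]. split; [lra|].
    rewrite <- affine by lra. rewrite E, (comb_tri1 _ _ _ (v4 (sqq Q iM I J))) by auto.
    destruct (al_lo (b + c) c ltac:(lra)) as [-> [-> [-> ->]]]. reflexivity.
  - exists a, (a + b). split; [lra|]. split; [lra|].
    rewrite <- affine by lra. rewrite E, (comb_tri2 _ (v2 (sqq Q iM I J))) by auto.
    destruct (al_up a (a + b) ltac:(lra)) as [-> [-> [-> ->]]]. reflexivity.
Qed.

Lemma psi_eq Q s t s' t' : s = s' -> t = t' -> psi Q s t = psi Q s' t'.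
Proof. intros; subst; reflexivity. Qed.

Lemma sqq_inj Q im a b a' b' : convex_ccw Q -> 0 < im -> im <= /4 ->
  (a <= 1)%nat -> (b <= 1)%nat -> (a' <= 1)%nat -> (b' <= 1)%nat ->
  sqq Q im a b = sqq Q im a' b' -> a = a' /\ b = b'.
Proof.
  intros HQ Hi Hi4 Ha Hb Ha' Hb' E.
  apply (f_equal v1) in E. simpl in E.
  assert (Ba : INR a <= 1) by (apply (le_INR a 1); lia).
  assert (Bb : INR b <= 1) by (apply (le_INR b 1); lia).
  assert (Ba' : INR a' <= 1) by (apply (le_INR a' 1); lia).
  assert (Bb' : INR b' <= 1) by (apply (le_INR b' 1); lia).
  pose proof (pos_INR a). pose proof (pos_INR b). pose proof (pos_INR a'). pose proof (pos_INR b').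
  apply psi_inj in E; [| auto | split; nra | split; nra | split; nra | split; nra].
  destruct E as [E1 E2].
  split; apply INR_eq; apply Rmult_eq_reg_r with im; lra.
Qed.

Lemma mk_adj W W' p q : W <> W' -> In (p, q) (sides W) -> In (q, p) (sides W') -> adj W W'.
Proof.
  intros H1 H2 H3. split; auto. exists (p, q), (q, p). split; auto. split; auto.
  right; simpl; auto.
Qed.

Lemma hole Q m W1 : convex_ccw Q -> (4 <= m)%nat -> tree_property W1 ->
  exists a0 b0, (a0 <= 1)%nat /\ (b0 <= 1)%nat /\ ~ W1 (sqq Q (/ INR m) a0 b0).
Proof.
  intros HQ Hm [_ [_ Hnc]].
  assert (Hm0 : 4 <= INR m) by (replace 4 with (INR 4) by (simpl; ring); apply le_INR; lia).
  set (im := / INR m).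
  assert (Hi : 0 < im) by (apply Rinv_0_lt_compat; lra).
  assert (Hi4 : im <= /4) by (apply Rinv_le_contravar; lra).
  destruct (classic (W1 (sqq Q im 0 0))) as [h00|h00]; [|exists 0%nat, 0%nat; auto].
  destruct (classic (W1 (sqq Q im 1 0))) as [h10|h10]; [|exists 1%nat, 0%nat; auto].
  destruct (classic (W1 (sqq Q im 1 1))) as [h11|h11]; [|exists 1%nat, 1%nat; auto].
  destruct (classic (W1 (sqq Q im 0 1))) as [h01|h01]; [|exists 0%nat, 1%nat; auto].
  exfalso. apply Hnc.
  assert (NE : forall a b a' b', (a <= 1)%nat -> (b <= 1)%nat -> (a' <= 1)%nat -> (b' <= 1)%nat ->
     (a <> a' \/ b <> b') -> sqq Q im a b <> sqq Q im a' b').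
  { intros a b a' b' ? ? ? ? Hd E. apply sqq_inj in E; auto. lia. }
  exists (sqq Q im 0 0), [sqq Q im 1 0; sqq Q im 1 1; sqq Q im 0 1].
  split; [simpl; lia|].
  split.
  { constructor. simpl. intros [H|[H|[H|[]]]]; symmetry in H; revert H; apply NE; lia.
    constructor. simpl. intros [H|[H|[]]]; symmetry in H; revert H; apply NE; lia.
    constructor. simpl. intros [H|[]]; symmetry in H; revert H; apply NE; lia.
    constructor. simpl; tauto. constructor. }
  split. { repeat constructor; auto. }
  split.
  { simpl. split; [|split; [|split; [|exact I]]].
    - apply mk_adj with (v2 (sqq Q im 0 0)) (v3 (sqq Q im 0 0)); [apply NE; lia| |].
      + unfold sides; right; left; reflexivity.
      + unfold sides; do 3 right; left; unfold sqq; simpl; f_equal; apply psi_eq; ring.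
    - apply mk_adj with (v3 (sqq Q im 1 0)) (v4 (sqq Q im 1 0)); [apply NE; lia| |].
      + unfold sides; right; right; left; reflexivity.
      + unfold sides; left; unfold sqq; simpl; f_equal; apply psi_eq; ring.
    - apply mk_adj with (v4 (sqq Q im 1 1)) (v1 (sqq Q im 1 1)); [apply NE; lia| |].
      + unfold sides; right; right; right; left; reflexivity.
      + unfold sides; right; left; unfold sqq; simpl; f_equal; apply psi_eq; ring. }
  simpl.
  apply mk_adj with (v1 (sqq Q im 0 1)) (v2 (sqq Q im 0 1)); [apply NE; lia| |].
  + unfold sides; left; reflexivity.
  + unfold sides; right; right; left; unfold sqq; simpl; f_equal; apply psi_eq; ring.
Qed.

Lemma abs4 e1 e2 e3 e4 x1 x2 x3 x4 D :
  Rabs e1 <= D -> Rabs e2 <= D -> Rabs e3 <= D -> Rabs e4 <= D ->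
  Rabs (e1 * x1 + e2 * x2 + e3 * x3 + e4 * x4) <= D * (Rabs x1 + Rabs x2 + Rabs x3 + Rabs x4).
Proof.
  intros.
  assert (forall e x, Rabs e <= D -> Rabs (e * x) <= D * Rabs x).
  { intros e x He. rewrite Rabs_mult. apply Rmult_le_compat_r; auto. apply Rabs_pos. }
  eapply Rle_trans. apply Rabs_triang.
  eapply Rle_trans. apply Rplus_le_compat_r. apply Rabs_triang.
  eapply Rle_trans. apply Rplus_le_compat_r. apply Rplus_le_compat_r. apply Rabs_triang.
  pose proof (H3 e1 x1 H). pose proof (H3 e2 x2 H0). pose proof (H3 e3 x3 H1). pose proof (H3 e4 x4 H2).
  lra.
Qed.

Lemma abs_bet x d : Rabs x <= d -> -d <= x <= d.
Proof. unfold Rabs; destruct (Rcase_abs x); lra. Qed.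

Lemma al_lip s t s' t' d : Rabs (s - s') <= d -> Rabs (t - t') <= d ->
  Rabs (al1 s t - al1 s' t') <= 2 * d /\ Rabs (al2 s t - al2 s' t') <= 2 * d /\
  Rabs (al3 s t - al3 s' t') <= 2 * d /\ Rabs (al4 s t - al4 s' t') <= 2 * d.
Proof.
  intros H1 H2.
  apply abs_bet in H1. apply abs_bet in H2.
  unfold al1, al2, al3, al4.
  destruct (Rle_dec t s); destruct (Rle_dec t' s'); repeat split; apply Rabs_le; lra.
Qed.

Definition Bq (Q : quad) : R :=
  Rabs (fst (v1 Q)) + Rabs (fst (v2 Q)) + Rabs (fst (v3 Q)) + Rabs (fst (v4 Q)) +
  Rabs (snd (v1 Q)) + Rabs (snd (v2 Q)) + Rabs (snd (v3 Q)) + Rabs (snd (v4 Q)).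

Lemma Bq_pos Q : 0 <= Bq Q.
Proof. unfold Bq. pose proof Rabs_pos. pose proof (H (fst (v1 Q))). pose proof (H (fst (v2 Q))).
  pose proof (H (fst (v3 Q))). pose proof (H (fst (v4 Q))). pose proof (H (snd (v1 Q))).
  pose proof (H (snd (v2 Q))). pose proof (H (snd (v3 Q))). pose proof (H (snd (v4 Q))). lra. Qed.

Lemma psi_lip Q s t s' t' d : 0 <= d -> Rabs (s - s') <= d -> Rabs (t - t') <= d ->
  dist2 (psi Q s t) (psi Q s' t') <= 8 * d ^ 2 * Bq Q ^ 2.
Proof.
  intros Hd H1 H2.
  destruct (al_lip s t s' t' d H1 H2) as [L1 [L2 [L3 L4]]].
  pose proof (Bq_pos Q) as HB.
  unfold dist2, psi, comb4, Bq in *.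
  destruct Q as [[x1 y1] [x2 y2] [x3 y3] [x4 y4]]; cbn [fst snd v1 v2 v3 v4] in *.
  set (e1 := al1 s t - al1 s' t') in *. set (e2 := al2 s t - al2 s' t') in *.
  set (e3 := al3 s t - al3 s' t') in *. set (e4 := al4 s t - al4 s' t') in *.
  set (B := Rabs x1 + Rabs x2 + Rabs x3 + Rabs x4 + Rabs y1 + Rabs y2 + Rabs y3 + Rabs y4) in *.
  match goal with |- (?X ^ 2 + ?Y ^ 2 <= _) =>
    assert (EX : X = e1 * x1 + e2 * x2 + e3 * x3 + e4 * x4) by (unfold e1, e2, e3, e4; ring);
    assert (EY : Y = e1 * y1 + e2 * y2 + e3 * y3 + e4 * y4) by (unfold e1, e2, e3, e4; ring) end.
  rewrite EX, EY.
  pose proof (abs4 e1 e2 e3 e4 x1 x2 x3 x4 (2 * d) L1 L2 L3 L4) as AX.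
  pose proof (abs4 e1 e2 e3 e4 y1 y2 y3 y4 (2 * d) L1 L2 L3 L4) as AY.
  rewrite <- (pow2_abs (e1 * x1 + e2 * x2 + e3 * x3 + e4 * x4)).
  rewrite <- (pow2_abs (e1 * y1 + e2 * y2 + e3 * y3 + e4 * y4)).
  set (ax := Rabs (e1 * x1 + e2 * x2 + e3 * x3 + e4 * x4)) in *.
  set (ay := Rabs (e1 * y1 + e2 * y2 + e3 * y3 + e4 * y4)) in *.
  assert (0 <= ax) by apply Rabs_pos. assert (0 <= ay) by apply Rabs_pos.
  assert (Px : 0 <= Rabs x1 + Rabs x2 + Rabs x3 + Rabs x4) by (pose proof (Rabs_pos x1); pose proof (Rabs_pos x2); pose proof (Rabs_pos x3); pose proof (Rabs_pos x4); lra).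
  assert (Py : 0 <= Rabs y1 + Rabs y2 + Rabs y3 + Rabs y4) by (pose proof (Rabs_pos y1); pose proof (Rabs_pos y2); pose proof (Rabs_pos y3); pose proof (Rabs_pos y4); lra).
  assert (ax <= 2 * d * B) by (unfold B; nra).
  assert (ay <= 2 * d * B) by (unfold B; nra).
  nra.
Qed.

Lemma nat_from_real (p q : nat) (s : R) : 0 <= s <= 1 -> INR p + / 2 = INR q + s -> p = q.
Proof.
  intros Hs E.
  assert (q < S p)%nat by (apply INR_lt; rewrite S_INR; lra).
  assert (p < S q)%nat by (apply INR_lt; rewrite S_INR; lra).
  lia.
Qed.

Theorem theorem4p2 (Q : quad) (m : nat) (W1 : quad -> Prop) :
  convex_ccw Q -> shorter_diag13 Q -> (4 <= m)%nat ->
  labyrinth_set Q m W1 ->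
  forall x : pt, ~ interior_pt (Linf Q W1) x.
Proof.
  intros HQ _ Hm HL x [eps [Heps Hint]].
  destruct HL as [_ [HS [Htree _]]].
  destruct (hole Q m W1 HQ Hm Htree) as [a0 [b0 [Ha0 [Hb0 Hno]]]].
  assert (Hm0 : 4 <= INR m) by (replace 4 with (INR 4) by (simpl; ring); apply le_INR; lia).
  set (im := / INR m) in *.
  assert (Hi : 0 < im) by (apply Rinv_0_lt_compat; lra).
  assert (Hi4 : im <= /4) by (apply Rinv_le_contravar; lra).
  assert (Hmi : INR m * im = 1) by (unfold im; field; lra).
  pose proof (Bq_pos Q) as HB.
  set (K := 3 * Bq Q + 1).
  assert (HK : 0 < K) by (unfold K; lra).
  destruct (pow_lt_1_zero im ltac:(rewrite Rabs_right; lra) (eps / K) ltac:(apply Rdiv_lt_0_compat; lra))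
    as [N HN].
  specialize (HN (S N) ltac:(lia)).
  set (iM := im ^ S N) in *.
  assert (HiM : 0 < iM) by (apply pow_lt; auto).
  rewrite Rabs_right in HN by lra.
  assert (Hx : Linf Q W1 x) by (apply Hint; unfold dist2; replace (fst x - fst x) with 0 by ring;
    replace (snd x - snd x) with 0 by ring; nra).
  destruct (Hx (S N) ltac:(lia)) as [V [HV Hr]].
  destruct (invariant Q m W1 HQ Hm HS N V HV) as [I [J [BI [BJ [_ EV]]]]].
  fold im iM in BI, BJ, EV. subst V.
  destruct (region_psi Q iM I J x HiM Hr) as [s [t [Hs [Ht Ex]]]].
  assert (Ba0 : INR a0 <= 1) by (apply (le_INR a0 1); lia).
  assert (Bb0 : INR b0 <= 1) by (apply (le_INR b0 1); lia).
  pose proof (pos_INR a0). pose proof (pos_INR b0). pose proof (pos_INR I). pose proof (pos_INR J).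
  set (u := (INR a0 + / 2) * im). set (w := (INR b0 + / 2) * im).
  assert (Hu : 0 <= u <= 1) by (unfold u; nra).
  assert (Hw : 0 <= w <= 1) by (unfold w; nra).
  set (y := psi Q ((INR I + u) * iM) ((INR J + w) * iM)).
  assert (Hy : Linf Q W1 y).
  { apply Hint. rewrite Ex. unfold y.
    eapply Rle_lt_trans. apply (psi_lip Q _ _ _ _ iM); [lra| |].
    - apply Rabs_le. replace ((INR I + s) * iM - (INR I + u) * iM) with ((s - u) * iM) by ring.
      destruct Hs, Hu. pose proof (Rmult_le_pos s iM ltac:(lra) ltac:(lra)).
      pose proof (Rmult_le_pos (1 - u) iM ltac:(lra) ltac:(lra)).
      pose proof (Rmult_le_pos u iM ltac:(lra) ltac:(lra)).
      pose proof (Rmult_le_pos (1 - s) iM ltac:(lra) ltac:(lra)).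
      split; nra.
    - apply Rabs_le. replace ((INR J + t) * iM - (INR J + w) * iM) with ((t - w) * iM) by ring.
      destruct Ht, Hw. pose proof (Rmult_le_pos t iM ltac:(lra) ltac:(lra)).
      pose proof (Rmult_le_pos (1 - w) iM ltac:(lra) ltac:(lra)).
      pose proof (Rmult_le_pos w iM ltac:(lra) ltac:(lra)).
      pose proof (Rmult_le_pos (1 - t) iM ltac:(lra) ltac:(lra)).
      split; nra.
    - assert (iM * K < eps) by (apply (Rmult_lt_compat_r K) in HN; [|lra];
        unfold Rdiv in HN; rewrite Rmult_assoc, Rinv_l in HN; lra).
      assert (0 <= iM * K) by nra.
      assert ((iM * K) ^ 2 < eps ^ 2) by nra.
      assert (8 * iM ^ 2 * Bq Q ^ 2 <= (iM * K) ^ 2).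
      { unfold K. pose proof (Rmult_le_pos (iM^2) (Bq Q) ltac:(nra) HB). nra. }
      lra. }
  destruct (Hy (S (S N)) ltac:(lia)) as [V' [HV' Hr']].
  destruct (invariant Q m W1 HQ Hm HS (S N) V' HV') as [I' [J' [BI' [BJ' [HW1 EV']]]]].
  change ((/ INR m) ^ S (S N)) with (im * iM) in BI', BJ', EV'. fold im in HW1.
  subst V'.
  assert (HiM' : 0 < im * iM) by nra.
  destruct (region_psi Q (im * iM) I' J' y HiM' Hr') as [s' [t' [Hs' [Ht' Ey]]]].
  unfold y in Ey.
  pose proof (pos_INR I'). pose proof (pos_INR J').
  apply psi_inj in Ey; [| auto | split; nra | split; nra | split; nra | split; nra].
  destruct Ey as [E1 E2].
  assert (F1 : INR (a0 + I * m) + / 2 = INR I' + s').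
  { rewrite plus_INR, mult_INR.
    assert (G : INR I + u = (INR I' + s') * im) by (apply Rmult_eq_reg_r with iM; [lra|lra]).
    unfold u in G.
    replace (INR a0 + INR I * INR m + / 2) with ((INR I + (INR a0 + / 2) * im) * INR m)
      by (rewrite Rmult_plus_distr_r, Rmult_assoc, (Rmult_comm im), Hmi; ring).
    rewrite G. rewrite Rmult_assoc, (Rmult_comm im), Hmi. ring. }
  assert (F2 : INR (b0 + J * m) + / 2 = INR J' + t').
  { rewrite plus_INR, mult_INR.
    assert (G : INR J + w = (INR J' + t') * im) by (apply Rmult_eq_reg_r with iM; [lra|lra]).
    unfold w in G.
    replace (INR b0 + INR J * INR m + / 2) with ((INR J + (INR b0 + / 2) * im) * INR m)
      by (rewrite Rmult_plus_distr_r, Rmult_assoc, (Rmult_comm im), Hmi; ring).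
    rewrite G. rewrite Rmult_assoc, (Rmult_comm im), Hmi. ring. }
  apply nat_from_real in F1; auto. apply nat_from_real in F2; auto.
  subst I' J'.
  rewrite !Nat.Div0.mod_add, !Nat.mod_small in HW1 by lia.
  exact (Hno HW1).
Qed.
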